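(* Let $G=(V,E)$ be a network and consider an $\mathbb{F}_q$-valued rate-$\omega$ LNEC code on $G$, as in the context. For a sink node $t\in T$ with $\dim\Phi(t)=\omega$, the code corrects at $t$ any error vector in the set $$\mathcal{Z}\Big(\mathcal{E}_t\big(\lfloor (d_{\min}^{(t)}-1)/2\rfloor\big)\Big)=\Big\{z\in\mathbb{F}_q^{|E|}: z\text{ matches some }\xi\in\mathcal{E}_t\big(\lfloor (d_{\min}^{(t)}-1)/2\rfloor\big)\Big\}.$$
   Context: Network: $G=(V,E)$ is a finite directed acyclic graph (parallel edges allowed) with a single source node $s$ and a set of sink nodes $T\subseteq V\setminus\{s\}$; $s$ has no incoming edges and sink nodes have no outgoing edges. For an edge $e$, $\mathrm{tail}(e)$, $\mathrm{head}(e)$ are its tail and head; $\mathrm{In}(v)$, $\mathrm{Out}(v)$ are the incoming/outgoing edge sets of node $v$. A directed path is a sequence of edges $(e_1,\dots,e_m)$, $m\ge1$, with $\mathrm{tail}(e_{k+1})=\mathrm{head}(e_k)$. LNEC code: with rate $\omega\ge1$ and finite field $\mathbb{F}_q$, introduce imaginary source edges $d_1',\dots,d_\omega'$ ending at $s$ with $\mathrm{In}(s)=\{d_1',\dots,d_\omega'\}$, and for each $e\in E$ an imaginary error edge $e'$ with head $\mathrm{tail}(e)$; $E'=\{e':e\in E\}$ (for non-source nodes, $\mathrm{In}(v)$ contains only edges of $E$). The code is given by local encoding coefficients $k_{d,e}\in\mathbb{F}_q$ for $e\in E$, $d\in\mathrm{In}(\mathrm{tail}(e))$. Extended global encoding kernels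 are vectors in $\mathbb{F}_q^{\omega+|E|}$ indexed by $\{d_i'\}\cup E'$: $\tilde f_{d_i'}=1_{d_i'}$, $\tilde f_{e'}=1_{e'}$ (standard basis vectors), and recursively in topological order $\tilde f_e=\sum_{d\in\mathrm{In}(\mathrm{tail}(e))}k_{d,e}\tilde f_d+1_{e'}$. For sink $t$, $\mathrm{row}_t(d')=(\tilde f_{\hat e}(d'):\hat e\in\mathrm{In}(t))$. Message space $\Phi(t)=\langle\mathrm{row}_t(d_i'):1\le i\le\omega\rangle$; error space $\Delta(t,\xi)=\langle\mathrm{row}_t(e'):e\in\xi\rangle$ for $\xi\subseteq E$. Minimum distance at $t$: $d_{\min}^{(t)}=\min\{|\xi|:\xi\subseteq E,\ \Phi(t)\cap\Delta(t,\xi)\neq\{0\}\}$. Error correction: an error vector $z=(z_e:e\in E)\in\mathbb{F}_q^{|E|}$ matches $\xi\subseteq E$ if $z_e=0$ for all $e\notin\xi$. For source message $x\in\mathbb{F}_q^\omega$ and error vector $z$, the received vector at $t$ is $\tilde y_t(x,z)=(x\ z)\cdot\tilde F_t$, $\tilde F_t=[\tilde f_e:e\in\mathrm{In}(t)]$. For a set $\mathcal{Z}$ of error vectors, the code corrects at $t$ any error vector in $\mathcal{Z}$ if for all $x,x'\in\mathbb{F}_q^\omega$ and $z,z'\in\mathcal{Z}$, $\tilde y_t(x,z)=\tilde y_t(x',z')$ implies $x=x'$. Graph notions: for $\xi\subseteq E$ and a node $u$, $A\subseteq E$ is a cut separating $u$ from $\xi$ if every directed path in $G$ whose first edge lies in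 $\xi$ and whose last edge has head $u$ contains an edge of $A$; $\mathrm{mincut}(\xi,u)$ is the minimum size of such a cut. $\mathcal{E}_t(r)=\{\xi\subseteq E:\mathrm{mincut}(\xi,t)\le r\}$. *)

(* Defs.v *)
From HB Require Import structures.
From mathcomp Require Import all_boot all_order all_algebra.
From mathcomp Require Import boolp.
Set Implicit Arguments. Unset Strict Implicit. Unset Printing Implicit Defensive.
Import Order.TTheory GRing.Theory Num.Theory.

Section Network.
Variables (V E : finType) (tl hd : E -> V).

(* directed path (e_1,...,e_m), m >= 1, given as e_1 :: rest *)
Definition dpath (e1 : E) (rest : seq E) : bool :=
  path (fun d e => hd d == tl e) e1 rest.

Definition acyclic : Prop :=
  forall e1 rest, dpath e1 rest -> hd (last e1 rest) != tl e1.

Definition is_cut (xi : {set E}) (u : V) (A : {set E}) : Prop :=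
  forall e1 rest, dpath e1 rest -> e1 \in xi -> hd (last e1 rest) = u ->
    exists2 e, e \in e1 :: rest & e \in A.

Definition mincut (xi : {set E}) (u : V) : nat :=
  \big[minn/#|E|]_(A : {set E} | `[< is_cut xi u A >]) #|A|.

Definition Eset (t : V) (r : nat) : {set E} -> Prop :=
  fun xi => mincut xi t <= r.

End Network.

Local Open Scope ring_scope.

Section LNEC.
Variables (V E : finType) (tl hd : E -> V) (s : V) (F : fieldType) (w : nat).

(* Extended global encoding kernels: fk e is the vector f~_e, indexed by
   'I_w + E  (inl i = imaginary source edge d_i', inr e = error edge e').
   They are characterised by the defining recursion (unique for a DAG):
   f~_e = sum_{d in In(tail e)} k_{d,e} f~_d + 1_{e'}, where In(s) consists
   of the imaginary source edges (coefficients kS i e) and for other nodes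
   of the real edges with head tail(e) (coefficients k d e). *)
Definition is_ext_kernel (kS : 'I_w -> E -> F) (k : E -> E -> F)
    (fk : E -> ('I_w + E)%type -> F) : Prop :=
  forall e c,
    fk e c = (if tl e == s then \sum_(i < w) kS i e * (c == inl i)%:R else 0)
             + \sum_(d | hd d == tl e) k d e * fk d c + (c == inr e)%:R.

(* row_t(c) : zero-padded to all of E, coordinate e nonzero only for e in In(t).
   Columns are indexed by 'I_#|E| via enum_val. *)
Definition rowt (fk : E -> ('I_w + E)%type -> F) (t : V) (c : ('I_w + E)%type)
  : 'rV[F]_#|E| :=
  \row_(j < #|E|) (if hd (enum_val j) == t then fk (enum_val j) c else 0).

(* Phi(t): row space of the matrix with rows row_t(d_i') *)
Definition PhiM fk t : 'M[F]_(w, #|E|) :=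
  \matrix_(i < w, j < #|E|) rowt fk t (inl i) 0 j.

(* Delta(t,xi): row space of the matrix with rows row_t(e'), e in xi *)
Definition DeltaM fk t (xi : {set E}) : 'M[F]_(#|E|, #|E|) :=
  \matrix_(i < #|E|, j < #|E|)
     (if enum_val i \in xi then rowt fk t (inr (enum_val i)) 0 j else 0).

(* d_min^(t): min |xi| with Phi(t) :&: Delta(t,xi) <> {0}
   (default #|E|.+1 if no such xi exists, which cannot happen when
   dim Phi(t) = w >= 1). *)
Definition dmin fk t : nat :=
  \big[minn/#|E|.+1]_(xi : {set E} | (PhiM fk t :&: DeltaM fk t xi != 0)%MS)
     #|xi|.

(* received vector at t, coordinate e (meaningful for e in In(t)) *)
Definition received fk (x : {ffun 'I_w -> F}) (z : {ffun E -> F}) (e : E) : F :=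
  \sum_(i < w) x i * fk e (inl i) + \sum_(d : E) z d * fk e (inr d).

Definition matches (z : {ffun E -> F}) (xi : {set E}) : Prop :=
  forall e, e \notin xi -> z e = 0.

Definition Zset (X : {set E} -> Prop) (z : {ffun E -> F}) : Prop :=
  exists2 xi, X xi & matches z xi.

Definition corrects fk (t : V) (Z : {ffun E -> F} -> Prop) : Prop :=
  forall x x' z z', Z z -> Z z' ->
    (forall e, hd e == t -> received fk x z e = received fk x' z' e) -> x = x'.

End LNEC.

(* Main.v *)
Require Import Defs.
From HB Require Import structures.
From mathcomp Require Import all_boot all_order all_algebra ring zify.
From Stdlib Require Import Classical.
From mathcomp Require boolp.
Import GRing.Theory Num.Theory.
Local Open Scope ring_scope.

Section Aux.
Variables (V E : finType) (tl hd : E -> V).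
Hypothesis Hacyc : acyclic tl hd.

Lemma nouniq_cycle (p : seq E) (x : E) :
  path (fun d e => hd d == tl e) x p -> ~~ uniq (x :: p) -> False.
Proof.
elim: p x => [|y p IH] x Hp /=.
  by [].
rewrite negb_and negbK => /orP [Hin | Hnu].
  have Hin' : x \in y :: p by [].
  case/splitPr: Hin' Hp => p1 p2 Hp.

  move: Hp; rewrite cat_path => /andP [Hp1 /= /andP [Hl _]].
  by move: (Hacyc x p1 Hp1); rewrite (eqP Hl) eqxx.
by move: Hp => /= /andP [_ Hp]; exact: (IH y Hp Hnu).
Qed.

Lemma no_back_chain (Q : E -> Prop) :
  (forall e, Q e -> exists2 d, hd d == tl e & Q d) -> forall e, ~ Q e.
Proof.
move=> HQ e Qe.
have H : forall n, exists e1 rest, [/\ size rest = n, Q e1 &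
   path (fun d e => hd d == tl e) e1 rest].
  elim=> [|n [e1 [rest [Hs Q1 Hp]]]]; first by exists e, [::].
  have [d Hd Qd] := HQ _ Q1.
  by exists d, (e1 :: rest); split => //=; [rewrite Hs | rewrite Hd Hp].
have [e1 [rest [Hs _ Hp]]] := H #|E|.
suff Hnu : ~~ uniq (e1 :: rest) by exact (@nouniq_cycle rest e1 Hp Hnu).
apply/negP => Hu.
have := card_uniqP Hu; move=> Hc.
have := max_card (mem (e1 :: rest)).
by rewrite Hc /= Hs ltnn.
Qed.

Lemma homog0 (F : fieldType) (c : E -> E -> F) (D : E -> F) :
  (forall e, D e = \sum_(d | hd d == tl e) c d e * D d) -> forall e, D e = 0.
Proof.
move=> HD e; case: (eqVneq (D e) 0) => // Hne; exfalso.
apply: (@no_back_chain (fun e => D e != 0) _ e Hne) => {e Hne} e Hne.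
case: (boolP [exists d, (hd d == tl e) && (D d != 0)]).
  by move=> /existsP [d /andP [H1 H2]]; exists d.
move=> /existsPn Hn; exfalso; move/eqP: Hne; apply.
rewrite HD big1 // => d Hd; move: (Hn d); rewrite Hd /= negbK => /eqP ->.
by rewrite mulr0.
Qed.

Lemma exist_sol (F : finFieldType) (c : E -> E -> F) (z : {ffun E -> F}) :
  exists g : {ffun E -> F},
    forall e, g e = \sum_(d | hd d == tl e) c d e * g d + z e.
Proof.
pose L (g : {ffun E -> F}) : {ffun E -> F} :=
  [ffun e => g e - \sum_(d | hd d == tl e) c d e * g d].
have Linj : injective L.
  move=> g1 g2 H; apply/ffunP => e; apply/eqP; rewrite -subr_eq0; apply/eqP.
  apply: (@homog0 F c (fun e => g1 e - g2 e)) => {}e.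
  move/ffunP: H => /(_ e); rewrite !ffunE => H.
  under eq_bigr do rewrite mulrBr.
  rewrite sumrB; apply/eqP; rewrite -subr_eq0; apply/eqP.
  set S1 := \sum_(_ | _) _; set S2 := \sum_(_ | _) _.
  transitivity ((g1 e - S1) - (g2 e - S2)); first ring.
  by rewrite H subrr.
have [Li LK KL] := injF_bij Linj.
exists (Li z) => e.
have := KL z; move/ffunP => /(_ e); rewrite ffunE => <-.
by rewrite addrC subrK.
Qed.

End Aux.

Section Cut.
Variables (V E : finType) (tl hd : E -> V) (s : V) (F : finFieldType) (w : nat).
Hypothesis Hacyc : acyclic tl hd.
Variables (kS : 'I_w -> E -> F) (k : E -> E -> F) (fk : E -> ('I_w + E)%type -> F).
Hypothesis Hfk : is_ext_kernel tl hd s kS k fk.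

Lemma fkR e d :
  fk e (inr d) = \sum_(d' | hd d' == tl e) k d' e * fk d' (inr d) + (d == e)%:R.
Proof.
rewrite Hfk; congr (_ + _).
case: ifP => _; last by rewrite add0r.
by rewrite big1 ?add0r // => i _; rewrite mulr0.
Qed.

Lemma lincomb (c : E -> E -> F) (phi : E -> E -> F)
  (Hphi : forall a e, phi a e =
     \sum_(d | hd d == tl e) c d e * phi a d + (a == e)%:R)
  (y : E -> F) e :
  \sum_a y a * phi a e =
  \sum_(d | hd d == tl e) c d e * (\sum_a y a * phi a d) + y e.
Proof.
under eq_bigr do rewrite Hphi mulrDr.
rewrite big_split /=; congr (_ + _).
  under eq_bigr do rewrite big_distrr.
  rewrite exchange_big; apply: eq_bigr => d _; rewrite big_distrr.
  by apply: eq_bigr => a _ /=; rewrite mulrCA.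
rewrite (bigD1 e) //= eqxx mulr1 big1 ?addr0 // => a /negbTE ->.
by rewrite mulr0.
Qed.

Lemma cut_lemma (z : {ffun E -> F}) (xi A : {set E}) (t : V) :
  matches z xi -> is_cut tl hd xi t A ->
  exists y : {ffun E -> F}, matches y A /\
    forall e, hd e == t ->
      \sum_d z d * fk e (inr d) = \sum_d y d * fk e (inr d).
Proof.
move=> Hz Hcut.
pose kA d e := if d \in A then 0 else k d e.
have [g Hg] := @exist_sol V E tl hd Hacyc F kA z.
pose y := [ffun e => if e \in A then g e else 0].
exists y; split.
  by move=> e /negbTE He; rewrite ffunE He.
pose u e := \sum_d z d * fk e (inr d).
pose ww e := \sum_d y d * fk e (inr d).
have Hu : forall e, u e = \sum_(d | hd d == tl e) k d e * u d + z e.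
  by move=> e; apply: (@lincomb k (fun a e => fk e (inr a))) => a e0; apply: fkR.
have Hw : forall e, ww e = \sum_(d | hd d == tl e) k d e * ww d + y e.
  by move=> e; apply: (@lincomb k (fun a e => fk e (inr a))) => a e0; apply: fkR.
pose R e := ww e + (if e \in A then 0 else g e).
have HR : forall e, R e = \sum_(d | hd d == tl e) k d e * R d + z e.
  move=> e0; rewrite /R; under eq_bigr do rewrite mulrDr.
  rewrite big_split /=.
  have -> : \sum_(d | hd d == tl e0) k d e0 * (if d \in A then 0 else g d)
            = \sum_(d | hd d == tl e0) kA d e0 * g d.
    by apply: eq_bigr => d _; rewrite /kA; case: (d \in A); rewrite ?mulr0 ?mul0r.
  rewrite -addrA -(Hg e0) {1}Hw -addrA; congr (_ + _).
  by rewrite /y ffunE; case: (e0 \in A); rewrite ?addr0 ?add0r.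
have HuR : forall e, u e = R e.
  move=> e; apply/eqP; rewrite -subr_eq0; apply/eqP; move: e.
  apply: (@homog0 V E tl hd Hacyc F k (fun e => u e - R e)) => e.
  under eq_bigr do rewrite mulrBr.
  rewrite sumrB {1}Hu {1}HR.
  set S1 := \sum_(_ | _) _; set S2 := \sum_(_ | _) _.
  ring.
pose P e := exists e1 rest, [/\ dpath tl hd e1 rest, z e1 != 0,
   last e1 rest = e & forall x, x \in e1 :: rest -> (x \notin A) || (x == e)].
have HP : forall e, g e != 0 -> P e.
  move=> e Hge; case: (classic (P e)) => // HnP; exfalso.
  apply: (@no_back_chain V E tl hd Hacyc (fun e => g e != 0 /\ ~ P e) _ e (conj Hge HnP)).
  clear Hge HnP e => e [Hge' HnP'].
  case: (eqVneq (z e) 0) => Hze; last first.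
    exfalso; apply: HnP'; exists e, [::]; split => //.
    by move=> x; rewrite inE => ->; rewrite orbT.
  case: (boolP [exists d, (hd d == tl e) && (kA d e * g d != 0)]); last first.
    move=> /existsPn Hn; exfalso; move: Hge'; rewrite Hg Hze addr0 big1 ?eqxx //.
    by move=> d Hd; move: (Hn d); rewrite Hd /= negbK => /eqP.
  move=> /existsP [d /andP [Hd Hkg]]; exists d => //.
  have HdA : d \notin A by move: Hkg; rewrite /kA; case: (d \in A); rewrite ?mul0r ?eqxx.
  split; first by move: Hkg; apply: contra => /eqP ->; rewrite mulr0.
  move=> [e1 [rest [Hp Hz1 Hl Hx]]]; apply: HnP'.
  exists e1, (rcons rest e); split => //.
  - by rewrite /dpath rcons_path -/(dpath tl hd e1 rest) Hp Hl Hd.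
  - by rewrite last_rcons.
  - move=> x; rewrite -rcons_cons mem_rcons inE => /orP [-> | Hxin]; first by rewrite orbT.
    by move: (Hx x Hxin) => /orP [-> // | /eqP ->]; rewrite HdA.
move=> e Het; rewrite -/(u e) HuR /R.
case: ifP => HeA; first by rewrite addr0.
case: (eqVneq (g e) 0) => [-> | Hge]; first by rewrite addr0.
have [e1 [rest [Hp Hz1 Hl Hx]]] := HP e Hge; exfalso.
have He1 : e1 \in xi by apply: contraR Hz1 => /Hz ->; rewrite eqxx.
have Hhd : hd (last e1 rest) = t by rewrite Hl (eqP Het).
have [x Hxin HxA] := Hcut e1 rest Hp He1 Hhd.
by move: (Hx x Hxin) => /orP [/negP // | /eqP Hxe]; rewrite Hxe HeA in HxA.
Qed.

End Cut.

Lemma small_cut (V E : finType) (tl hd : E -> V) (xi : {set E}) (t : V) (r : nat) :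
  (mincut tl hd xi t <= r)%N ->
  exists A, is_cut tl hd xi t A /\ (#|A| <= r)%N.
Proof.
have : mincut tl hd xi t = #|E| \/
       exists A, is_cut tl hd xi t A /\ #|A| = mincut tl hd xi t.
  rewrite /mincut; apply: (big_ind (fun n => n = #|E| \/
       exists A, is_cut tl hd xi t A /\ #|A| = n)).
  - by left.
  - move=> a b Ha Hb; case: (leqP a b) => _; first [exact: Ha | exact: Hb].
  - by move=> A /boolp.asboolP HA; right; exists A.
case=> [-> | [A [HA <-]]] Hr; last by exists A.
exists setT; split; last by rewrite cardsT.
by move=> e1 rest _ _ _; exists e1; rewrite ?mem_head ?in_setT.
Qed.

Lemma bigminn_le (I : finType) (P : pred I) (G : I -> nat) (x0 : nat) (j : I) :
  P j -> (\big[minn/x0]_(i | P i) G i <= G j)%N.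
Proof.
move=> Pj; have : j \in index_enum I by rewrite mem_index_enum.
elim: (index_enum I) => [//|i r IH]; rewrite inE big_cons => /orP [/eqP <- | Hin].
  by rewrite Pj geq_minl.
case: (P i); last exact: IH.
by rewrite geq_min IH ?orbT.
Qed.

Theorem corollary12
  (V E : finType) (tl hd : E -> V) (s : V) (T : {set V})
  (Hacyc : acyclic tl hd)
  (HsT : s \notin T)
  (Hsrc : forall e, hd e != s)
  (Hsink : forall t e, t \in T -> tl e != t)
  (F : finFieldType) (w : nat) (Hw : (1 <= w)%N)
  (kS : 'I_w -> E -> F) (k : E -> E -> F) (fk : E -> ('I_w + E)%type -> F)
  (Hfk : is_ext_kernel tl hd s kS k fk)
  (t : V) (Ht : t \in T)
  (Hdim : \rank (PhiM hd fk t) = w) :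
  corrects hd fk t
    (Zset (Eset tl hd t (((dmin hd fk t).-1)./2)%N)).
Proof.
move=> x x' z z' [xi Hxi Hzm] [xi' Hxi' Hzm'] Hrec.
set r := ((dmin hd fk t).-1./2)%N in Hxi Hxi'.
have [A [HA HAr]] := @small_cut V E tl hd xi t r Hxi.
have [A' [HA' HAr']] := @small_cut V E tl hd xi' t r Hxi'.
have [y [Hym Hy]] := @cut_lemma V E tl hd s F w Hacyc kS k fk Hfk z xi A t Hzm HA.
have [y' [Hym' Hy']] := @cut_lemma V E tl hd s F w Hacyc kS k fk Hfk z' xi' A' t Hzm' HA'.
pose yy := [ffun d => y' d - y d].
pose B := A :|: A'.
have Hyy : matches yy B.
  move=> d; rewrite /B inE negb_or => /andP [H1 H2].
  by rewrite ffunE (Hym _ H1) (Hym' _ H2) subrr.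
have reidx : forall G : E -> F, \sum_(i < #|E|) G (enum_val i) = \sum_d G d.
  move=> G; rewrite [RHS](reindex (@enum_val E (mem E))) //; apply: onW_bij; exact: enum_val_bij.
pose v := \row_(i < w) (x i - x' i).
pose uu := \row_(i < #|E|) yy (enum_val i).
have Hm : v *m PhiM hd fk t = uu *m DeltaM hd fk t B.
  apply/rowP => j; rewrite !mxE.
  under eq_bigr do rewrite !mxE.
  under [in RHS]eq_bigr do rewrite !mxE.
  case: (boolP (hd (enum_val j) == t)) => Hej; last first.
    rewrite !big1 // => i _; first by case: ifP => _; rewrite ?mulr0.
    by rewrite mulr0.
  have -> : \sum_(i < #|E|) yy (enum_val i) *
      (if enum_val i \in B then fk (enum_val j) (inr (enum_val i)) else 0)
    = \sum_(i < #|E|) yy (enum_val i) * fk (enum_val j) (inr (enum_val i)).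
    apply: eq_bigr => i _; case: (boolP (enum_val i \in B)) => // Hi.
    by rewrite (Hyy _ Hi) !mul0r.
  rewrite (reidx (fun d => yy d * fk (enum_val j) (inr d))).
  have H := Hrec _ Hej; rewrite /received (Hy _ Hej) (Hy' _ Hej) in H.
  under eq_bigr do rewrite mulrBl.
  under [X in _ = X]eq_bigr do rewrite ffunE mulrBl.
  rewrite !sumrB.
  apply/eqP; rewrite -subr_eq0; apply/eqP.
  move: H; set X := \sum_(i < w) _; set X' := \sum_(i < w) _.
  set Y := \sum_d _; set Y' := \sum_d _ => H.
  transitivity ((X + Y) - (X' + Y')); first ring.
  by rewrite H subrr.
have Hfree : row_free (PhiM hd fk t) by rewrite /row_free Hdim.
case: (eqVneq (v *m PhiM hd fk t) 0) => Hm0.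
  have Hv : v = 0 by apply: (row_free_inj Hfree); rewrite /= Hm0 mul0mx.
  apply/ffunP => i; move/rowP: Hv => /(_ i); rewrite !mxE => /eqP.
  by rewrite subr_eq0 => /eqP.
exfalso.
have Hcap : (PhiM hd fk t :&: DeltaM hd fk t B != 0)%MS.
  apply/negP => /eqP H0.
  have : (v *m PhiM hd fk t <= PhiM hd fk t :&: DeltaM hd fk t B)%MS.
    by rewrite sub_capmx submxMl Hm submxMl.
  by rewrite H0 submx0 (negbTE Hm0).
have Hd : (dmin hd fk t <= #|B|)%N.
  by rewrite /dmin; apply: bigminn_le.
have HB : (0 < #|B|)%N.
  rewrite card_gt0; apply/negP => /eqP HB0.
  have Hu0 : uu = 0.
    apply/rowP => i; rewrite !mxE; apply: Hyy; by rewrite HB0 inE.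
  by move: Hm0; rewrite Hm Hu0 mul0mx eqxx.
have HBc : (#|B| <= #|A| + #|A'|)%N by apply: leq_card_setU.
have Hr := odd_double_half (dmin hd fk t).-1.
rewrite -/r -muln2 in Hr.
lia.
Qed.
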